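(* Let $L\ge 3$, $W=(\mathbb{Z}/2\mathbb{Z})^{*L}$ with generating set $S$, $q\in(0,1]$, $h=\sum_{s\in S}T_s$, and let $R_h$ be the operator on $\ell^2(W)$ of right multiplication by $h$. For every $v,w\in W$ with $|v|=|w|$ and every $\epsilon>0$ there exists $\eta\in\ell^2(W)$ such that $$\|e_v-e_w-(h\eta-R_h\eta)\|_2<\epsilon.$$
   Context: $W=(\mathbb{Z}/2\mathbb{Z})^{*L}$ is the free product of $L$ copies of $\mathbb{Z}/2\mathbb{Z}$; $S$ is the set of the $L$ canonical generators, $|\cdot|$ is word length with respect to $S$. Put $p=\frac{q-1}{q^2}$. $\mathbb{C}_q[W]$ is the $*$-algebra with linear basis $\{T_w: w\in W\}$, $T_e=1$, $T_w^*=T_{w^{-1}}$, and for $s\in S$, $w\in W$: $T_sT_w=T_{sw}$ if $|sw|>|w|$, $T_sT_w=T_{sw}+pT_w$ if $|sw|<|w|$ (equivalently $T_wT_s=T_{ws}$ if $|ws|>|w|$, $T_wT_s=T_{ws}+pT_w$ if $|ws|<|w|$). Identify $T_w$ with $e_w=\delta_w\in\ell^2(W)$; left multiplication by $h$ extends to a bounded operator (again denoted $h$) on $\ell^2(W)$, and right multiplication by $h$, $T_v\mapsto T_vh$, extends to a bounded operator $R_h$ on $\ell^2(W)$. *)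

(* Defs.v *)
From HB Require Import structures.
From mathcomp Require Import all_boot all_order all_algebra.
From mathcomp Require Import complex.
From mathcomp Require Import reals.
Set Implicit Arguments. Unset Strict Implicit. Unset Printing Implicit Defensive.
Import Order.TTheory GRing.Theory Num.Theory.
Local Open Scope ring_scope.
Local Open Scope complex_scope.

(* The free product W = (Z/2Z)^{*L}: elements are reduced words over the
   alphabet 'I_L (the canonical generators), i.e. words with no two equal
   consecutive letters. *)
Definition reduced (L : nat) (s : seq 'I_L) : bool :=
  sorted (fun a b : 'I_L => a != b) s.

Definition FreeZ2 (L : nat) := {s : seq 'I_L | reduced s}.

Definition wlen (L : nat) (w : FreeZ2 L) : nat := size (val w).

Definition lmul_seq (L : nat) (s : 'I_L) (w : seq 'I_L) : seq 'I_L :=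
  if w is a :: w' then (if a == s then w' else s :: w) else [:: s].

Definition rmul_seq (L : nat) (w : seq 'I_L) (s : 'I_L) : seq 'I_L :=
  if w is a :: w' then
    (if last a w' == s then belast a w' else rcons w s)
  else [:: s].

Lemma lmul_reduced (L : nat) (s : 'I_L) (w : seq 'I_L) :
  reduced w -> reduced (lmul_seq s w).
Proof.
rewrite /reduced /lmul_seq; case: w => [|a w] //= H.
case: eqP => [_|/eqP Has]; first by case: w H => //= b w /andP[].
by rewrite /= eq_sym Has.
Qed.

Lemma rmul_reduced (L : nat) (w : seq 'I_L) (s : 'I_L) :
  reduced w -> reduced (rmul_seq w s).
Proof.
rewrite /reduced /rmul_seq; case: w => [|a w] // H.
case: eqP => [_|/eqP Has].
  move: H; rewrite lastI; case: (belast a w) => [|b t] //=.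
  by rewrite rcons_path => /andP[].
by move: H; rewrite /= rcons_path => ->.
Qed.

Definition lgen (L : nat) (s : 'I_L) (w : FreeZ2 L) : FreeZ2 L :=
  exist _ (lmul_seq s (val w)) (lmul_reduced s (valP w)).
Definition rgen (L : nat) (w : FreeZ2 L) (s : 'I_L) : FreeZ2 L :=
  exist _ (rmul_seq (val w) s) (rmul_reduced s (valP w)).

Definition hecke_p (R : realType) (q : R) : R := (q - 1) / q ^+ 2.

Section Ops.
Variables (R : realType) (L : nat).
Local Notation C := (R[i]).
Local Notation W := (FreeZ2 L).

Definition basis_vec (w : W) : W -> C := fun x => (x == w)%:R.

(* Action of T_s by left multiplication on a coefficient function f : W -> C
   (f = sum_w f(w) e_w).  From T_s e_w = e_{sw} (|sw| > |w|) and
   T_s e_w = e_{sw} + p e_w (|sw| < |w|), the coefficient at x is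
   f(sx) + p [|sx| < |x|] f(x). *)
Definition Tleft (p : R) (s : 'I_L) (f : W -> C) : W -> C :=
  fun x => f (lgen s x) + (if (wlen (lgen s x) < wlen x)%N then p%:C * f x else 0).

(* Right multiplication by T_s: from e_w T_s = e_{ws} (|ws| > |w|) and
   e_w T_s = e_{ws} + p e_w (|ws| < |w|). *)
Definition Tright (p : R) (s : 'I_L) (f : W -> C) : W -> C :=
  fun x => f (rgen x s) + (if (wlen (rgen x s) < wlen x)%N then p%:C * f x else 0).

Definition hleft (p : R) (f : W -> C) : W -> C :=
  fun x => \sum_(s < L) Tleft p s f x.
Definition hright (p : R) (f : W -> C) : W -> C :=
  fun x => \sum_(s < L) Tright p s f x.

Definition sqsum (f : W -> C) (s : seq W) : C := \sum_(x <- s) `|f x| ^+ 2.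

Definition in_l2 (f : W -> C) : Prop :=
  exists M : R, forall s : seq W, uniq s -> sqsum f s <= M%:C.

Definition l2norm_lt (f : W -> C) (eps : R) : Prop :=
  exists b : R, b < eps ^+ 2 /\ forall s : seq W, uniq s -> sqsum f s <= b%:C.

End Ops.

(* Main.v *)
Require Import Defs.
From mathcomp Require Import all_boot all_order all_algebra.
From mathcomp Require Import complex.
From mathcomp Require Import reals.
From mathcomp Require Import zify ring.
Set Implicit Arguments. Unset Strict Implicit. Unset Printing Implicit Defensive.
Import Order.TTheory GRing.Theory Num.Theory.
Local Open Scope ring_scope.

Section G.
Variables (R : realType) (L N : nat) (Y : seq 'I_L).

Definition Fc (k : nat) : R := - ((N.+1 - k)%:R / (N.+1%:R * (L.-1)%:R ^+ k)).

Definition Gf (z : seq 'I_L) : R :=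
  let d := (size z - size Y)%N in
  if (size Y <= size z)%N && ~~ odd d && (take (size Y) (drop d./2 z) == Y)
  then Fc d./2 else 0.

Lemma G_eq z k : size z = (size Y + k.*2)%N ->
  Gf z = if take (size Y) (drop k z) == Y then Fc k else 0.
Proof.
move=> hz; rewrite /Gf hz leq_addr addKn odd_double doubleK /=.
by case: ifP.
Qed.

Lemma G_odd z : ((size z < size Y) || odd (size z - size Y))%N -> Gf z = 0.
Proof.
rewrite /Gf; case/orP => h.
  by rewrite leqNgt h.
by rewrite h andbF.
Qed.

Lemma sum_neq_const (a : 'I_L) (c : R) :
  \sum_(s < L | s != a) c = (L.-1)%:R * c.
Proof.
by rewrite (eq_bigl (fun s => s \in predC1 a)) // sumr_const cardC1 card_ord mulr_natl.
Qed.


Lemma take_drop_rcons (T : Type) (b : seq T) l k n :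
  (k + n <= size b)%N -> take n (drop k (rcons b l)) = take n (drop k b).
Proof.
move=> h; rewrite drop_rcons; last by lia.
by rewrite -cats1 takel_cat // size_drop; lia.
Qed.

Lemma take_belast (T : Type) (y : T) s : take (size s) (y :: s) = belast y s.
Proof. by elim: s y => //= b s IH y; rewrite IH. Qed.

Lemma ifmul (b : bool) (c : R) : (if b then c else 0) = b%:R * c.
Proof. by case: b; rewrite ?mul1r ?mul0r. Qed.

Lemma G_eq' z k : size z = (size Y + k.*2)%N ->
  Gf z = (take (size Y) (drop k z) == Y)%:R * Fc k.
Proof. by move/G_eq => ->; rewrite ifmul. Qed.

Lemma G_odd' z k : size z = (size Y + k.*2).+1 -> Gf z = 0.
Proof.
move=> h; apply: G_odd; apply/orP; right.
by rewrite h -addnS addKn -addn1 oddD odd_double.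
Qed.

Lemma G_small z : (size z < size Y)%N -> Gf z = 0.
Proof. by move=> h; apply: G_odd; rewrite h. Qed.

Definition Err (x : seq 'I_L) : R :=
  let m := ((size x - size Y)./2)%N in
  if (size Y < size x)%N && odd (size x - size Y) then
    (Fc m - (L.-1)%:R * Fc m.+1) *
    ((take (size Y) (drop m.+1 x) == Y)%:R - (take (size Y) (drop m x) == Y)%:R)
  else 0.

Lemma Dpoint (x : seq 'I_L) : reduced Y -> (2 <= size Y)%N ->
  \sum_(s < L) Gf (lmul_seq s x) - \sum_(s < L) Gf (rmul_seq x s) =
  Fc 0 * ((x == behead Y)%:R - (x == take (size Y).-1 Y)%:R) + Err x.
Proof.
move=> redY hY.
have [y [Y' EY]] : exists y Y', Y = y :: Y'.
  by case: Y hY => [|y Y'] //; exists y, Y'.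
case: x => [|a x'].
  rewrite subrr /Err /= EY /=; case: Y' EY hY => [|y2 Y''] // EY hY /=;
  by rewrite ?subrr ?mulr0 ?addr0.
set x := a :: x'.
have hl : \sum_(s < L) Gf (lmul_seq s x) = Gf x' + \sum_(s < L | s != a) Gf (s :: x).
  rewrite (bigD1 a) //= eqxx; congr (_ + _); apply: eq_bigr => s hs.
  by rewrite eq_sym (negbTE hs).
have hr : \sum_(s < L) Gf (rmul_seq x s) =
          Gf (belast a x') + \sum_(s < L | s != last a x') Gf (rcons x s).
  rewrite (bigD1 (last a x')) //= eqxx; congr (_ + _); apply: eq_bigr => s hs.
  by rewrite eq_sym (negbTE hs).
rewrite hl hr.
have sx : size x = (size x').+1 by [].
have sb : size (belast a x') = size x' by rewrite size_belast.
have Tsz : forall (z : seq 'I_L) k, z = take k Y -> (k <= size Y)%N -> size z = k.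
  by move=> z k -> hk; rewrite size_takel.
have nb : (size x).+1 <> size Y -> (x == behead Y) = false.
  move=> h; apply/negP => /eqP e; apply: h; rewrite e size_behead; lia.
have nt : (size x).+1 <> size Y -> (x == take (size Y).-1 Y) = false.
  move=> h; apply/negP => /eqP e; apply: h; rewrite (Tsz _ _ e); lia.
have [hA | hB] := ltnP (size x).+1 (size Y).
  rewrite (G_small (z := x')) ?(G_small (z := belast a x')); try lia.
  rewrite !big1 => [| s _ | s _]; try (apply: G_small; rewrite ?size_rcons /=; lia).
  rewrite nb ?nt; try lia.
  rewrite /Err; have -> : (size Y < size x)%N = false by lia.
  by rewrite /= !(addr0, add0r, subrr, mulr0, oppr0).
case: (eqVneq (size Y) (size x).+1) => [hE | hne].
  rewrite (G_small (z := x')) ?(G_small (z := belast a x')); try lia.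
  rewrite /Err; have -> : (size Y < size x)%N = false by lia.
  have e1 : \sum_(s < L | s != a) Gf (s :: x) = (x == behead Y)%:R * Fc 0.
    transitivity (\sum_(s < L | s != a) ((s :: x == Y)%:R * Fc 0)).
      apply: eq_bigr => s _; rewrite (G_eq' (k := 0)) /=; last by lia.
      by rewrite take_oversize //= hE.
    move: redY; rewrite EY /= /reduced /=.
    case: (eqVneq x Y') => [ex | nx] redY.
      rewrite -ex /= in redY; case/andP: redY => ya _.
      rewrite (bigD1 y) //= ex eqxx mul1r big1 ?addr0 // => s /andP [_ sy].
      by rewrite eqseq_cons (negbTE sy) mul0r.
    by rewrite big1 ?mul0r // => s _; rewrite eqseq_cons (negbTE nx) andbF mul0r.
  have e2 : \sum_(s < L | s != last a x') Gf (rcons x s) =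
            (x == take (size Y).-1 Y)%:R * Fc 0.
    transitivity (\sum_(s < L | s != last a x') ((rcons x s == Y)%:R * Fc 0)).
      apply: eq_bigr => s _; rewrite (G_eq' (k := 0)) /=; last by rewrite size_rcons; lia.
      by rewrite take_oversize //= size_rcons hE.
    have hYr : Y = rcons (belast y Y') (last y Y') by rewrite EY lastI.
    have hT : take (size Y).-1 Y = belast y Y' by rewrite EY /= take_belast.
    rewrite hT.
    case: (eqVneq x (belast y Y')) => [ex | nx].
      have ya : last a x' != last y Y'.
        by move: redY; rewrite hYr -ex /x /reduced /= rcons_path => /andP[_ ->].
      rewrite (bigD1 (last y Y')); last by rewrite eq_sym.
      rewrite hYr -ex eqxx mul1r big1 => [|s /andP [_ sy]]; first by rewrite /= addr0.
      by rewrite eqseq_rcons (negbTE sy) andbF mul0r.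
    by rewrite big1 ?mul0r // => s _; rewrite hYr eqseq_rcons (negbTE nx) mul0r.
  rewrite e1 e2 /=; ring.
have hge : (size Y <= size x)%N by move/eqP: hne; lia.
rewrite nb ?nt; try lia.
rewrite /Err.
set d := (size x - size Y)%N.
have hxd : size x = (size Y + d)%N by rewrite /d; lia.
have hd := odd_double_half d.
set m := d./2.
rewrite -/m in hd *.
case hod: (odd d) in hd *.
  have hx' : size x' = (size Y + m.*2)%N by move: hd hxd sx; rewrite -!muln2 /=; lia.
  rewrite (G_eq' (z:=x') (k:=m)) // (G_eq' (z:=belast a x') (k:=m)) ?sb //.
  have e1 : \sum_(s < L | s != a) Gf (s :: x) =
            (L.-1)%:R * ((take (size Y) (drop m x) == Y)%:R * Fc m.+1).
    rewrite -(sum_neq_const a); apply: eq_bigr => s _; rewrite (G_eq' (k:=m.+1)) //.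
    by rewrite /= hx' doubleS; lia.
  have e2 : \sum_(s < L | s != last a x') Gf (rcons x s) =
            (L.-1)%:R * ((take (size Y) (drop m.+1 x) == Y)%:R * Fc m.+1).
    rewrite -(sum_neq_const (last a x')); apply: eq_bigr => s _; rewrite (G_eq' (k:=m.+1)).
      by rewrite take_drop_rcons //; move: hd hxd; rewrite -!muln2 /=; lia.
    by rewrite size_rcons /= hx' doubleS; lia.
  have e3 : take (size Y) (drop m x) = take (size Y) (drop m (belast a x')).
    by rewrite /x lastI take_drop_rcons // sb; move: hx'; rewrite -!muln2; lia.
  have e4 : drop m x' = drop m.+1 x by [].
  rewrite e1 e2 -e3 e4.
  have -> : (size Y < size x)%N by move: hd hxd; rewrite -!muln2 /=; lia.
  rewrite /=; ring.
have z0 : forall z, size z = size x' -> Gf z = 0.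
  move=> z hz; have [m0|mpos] := posnP m.
    by apply: G_small; move: hd hxd sx hz; rewrite m0 /=; lia.
  apply: (G_odd' (k := m.-1)); move: hd hxd sx hz mpos; rewrite -!muln2 /=; lia.
rewrite z0 // z0 ?sb // !big1 => [|s _|s _].
- by rewrite andbF /=; ring.
- by apply: (G_odd' (k := m)); move: hd hxd sx; rewrite size_rcons -!muln2 /=; lia.
- by apply: (G_odd' (k := m)); move: hd hxd sx; rewrite -!muln2 /=; lia.
Qed.

End G.

Section Count.
Variables (L : nat).

Definition ext (w : seq 'I_L) : seq (seq 'I_L) :=
  [seq a :: w | a <- enum 'I_L & (if w is b :: _ then a != b else true)].

Fixpoint redl (k : nat) : seq (seq 'I_L) :=
  if k is k'.+1 then flatten [seq ext w | w <- redl k'] else [:: [::]].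

Lemma redl_mem (w : seq 'I_L) : reduced w -> w \in redl (size w).
Proof.
elim: w => [|a w IH] //= hw.
have hw' : reduced w by move: hw; rewrite /reduced /=; case: w {IH} => //= b w /andP[].
apply/flatten_mapP; exists w; first exact: IH.
apply/mapP; exists a => //; rewrite mem_filter mem_enum andbT.
by move: hw; rewrite /reduced /=; case: w {IH hw'} => //= b w /andP[].
Qed.

Lemma redl_size k w : w \in redl k -> size w = k.
Proof.
elim: k w => [|k IH] w /=; first by rewrite inE => /eqP ->.
case/flatten_mapP => w0 /IH <- /mapP [a _ ->] //.
Qed.

Lemma size_flatten_le (T : eqType) (U : Type) (f : T -> seq U) (ws : seq T) c :
  (forall w, w \in ws -> (size (f w) <= c)%N) ->
  (size (flatten [seq f w | w <- ws]) <= c * size ws)%N.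
Proof.
elim: ws => [|w ws IH] //= h.
rewrite size_cat mulnS leq_add ?h ?mem_head // IH // => w' hw'.
by apply: h; rewrite inE hw' orbT.
Qed.

Lemma size_ext_cons b w : (size (ext (b :: w)) <= L.-1)%N.
Proof.
rewrite size_map size_filter.
have := count_predC (pred1 b) (enum 'I_L).
rewrite size_enum_ord (count_uniq_mem _ (enum_uniq _)) mem_enum /=.
have -> : count (fun a : 'I_L => a != b) (enum 'I_L) = count (predC (pred1 b)) (enum 'I_L).
  by apply: eq_count => a.
lia.
Qed.

Lemma size_ext w : (size (ext w) <= L)%N.
Proof. by rewrite size_map size_filter (leq_trans (count_size _ _)) // size_enum_ord. Qed.

Lemma redl_card k : (1 < L)%N -> (size (redl k) <= L * (L.-1) ^ k)%N.
Proof.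
move=> hL.
have H1 : forall k, (size (redl k.+2) <= L.-1 * size (redl k.+1))%N.
  move=> k0; rewrite (_ : redl k0.+2 = flatten [seq ext w | w <- redl k0.+1]) //; apply: size_flatten_le => w hw; have := redl_size hw.
  by case: w {hw} => // b w _; apply: size_ext_cons.
elim: k => [|k IH]; first by rewrite /= expn0 muln1; lia.
case: k IH => [|k] IH.
  by rewrite /= cats0 (leq_trans (size_ext _)) // expn1; nia.
rewrite (leq_trans (H1 k)) // expnS mulnCA leq_mul2l IH orbT //.
Qed.

Lemma count_le (s : seq (FreeZ2 L)) l : uniq s ->
  (count (fun x => wlen x == l) s <= size (redl l))%N.
Proof.
move=> us; rewrite -size_filter -(size_map val).
apply: uniq_leq_size.
  by rewrite map_inj_uniq ?filter_uniq //; exact: val_inj.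
move=> y /mapP [x]; rewrite mem_filter => /andP[/eqP hl _] ->.
rewrite -hl; apply: redl_mem; exact: (valP x).
Qed.

Lemma sum_ind (R : realType) (T : Type) (P : pred T) (s : seq T) :
  \sum_(x <- s) (P x)%:R = (count P s)%:R :> R.
Proof.
elim: s => [|x s IH]; first by rewrite big_nil.
by rewrite big_cons IH /= natrD.
Qed.

Lemma sum_count (R : realType) (phi : nat -> R) B (s : seq (FreeZ2 L)) :
  (1 < L)%N -> (forall l, (B <= l)%N -> phi l = 0) -> (forall l, 0 <= phi l) ->
  uniq s ->
  \sum_(x <- s) phi (wlen x) <= \sum_(l < B) phi l * (L * L.-1 ^ l)%:R.
Proof.
move=> hL h0 hp us.
have e : \sum_(x <- s) phi (wlen x) =
         \sum_(x <- s) \sum_(l < B) (wlen x == l)%:R * phi l.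
  apply: eq_bigr => x _; case: (ltnP (wlen x) B) => h.
    rewrite (bigD1 (Ordinal h)) //= eqxx mul1r big1 ?addr0 // => j hj.
    rewrite (_ : (wlen x == j) = false) ?mul0r //; apply/negP => /eqP e.
    by move: hj; rewrite (_ : j = Ordinal h) ?eqxx //; apply: val_inj; rewrite /= e.
  rewrite h0 // big1 // => j _; rewrite (_ : (wlen x == j) = false) ?mul0r //.
  by apply/negP => /eqP e; have := ltn_ord j; lia.
rewrite e exchange_big /=; apply: ler_sum => l _.
rewrite -mulr_suml sum_ind mulrC ler_wpM2l // ler_nat.
exact: leq_trans (count_le _ us) (redl_card _ hL).
Qed.
End Count.

Local Open Scope complex_scope.

Section S.
Variables (R : realType) (L : nat).
Local Notation C := (R[i]).
Local Notation W := (FreeZ2 L).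

Lemma psum_l (c : C) (x : W) :
  \sum_(s < L) (if (wlen (lgen s x) < wlen x)%N then c else 0) =
  (if val x is [::] then 0 else c).
Proof.
rewrite /wlen /lgen /=; case: (val x) => [|a w] /=.
  by apply: big1.
rewrite (bigD1 a) //= eqxx ltnSn big1 ?addr0 // => s /negbTE.
by rewrite eq_sym => ->; rewrite /= ltnNge leqW.
Qed.

Lemma psum_r (c : C) (x : W) :
  \sum_(s < L) (if (wlen (rgen x s) < wlen x)%N then c else 0) =
  (if val x is [::] then 0 else c).
Proof.
rewrite /wlen /rgen /=; case: (val x) => [|a w] /=.
  by apply: big1.
rewrite (bigD1 (last a w)) //= eqxx size_belast ltnSn big1 ?addr0 // => s /negbTE.
by move=> H; rewrite eq_sym H /= size_rcons ltnNge leqW.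
Qed.

Lemma hdiff p (f : W -> C) x :
  hleft p f x - hright p f x = \sum_(s < L) f (lgen s x) - \sum_(s < L) f (rgen x s).
Proof.
rewrite /hleft /hright /Tleft /Tright !big_split /=.
have -> : \sum_(s < L) (if (wlen (lgen s x) < wlen x)%N then p%:C * f x else 0) =
          \sum_(s < L) (if (wlen (rgen x s) < wlen x)%N then p%:C * f x else 0).
  by rewrite psum_l psum_r.
by rewrite opprD addrACA subrr addr0.
Qed.
End S.

Section Extra.
Variables (R : realType) (L N : nat).
Hypothesis hL : (1 < L)%N.

Lemma qpos : 0 < (L.-1)%:R :> R.
Proof. by rewrite ltr0n; lia. Qed.

Lemma Fc0 : Fc R L N 0 = -1.
Proof. by rewrite /Fc subn0 expr0 mulr1 divff // pnatr_eq0. Qed.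

Lemma coefE m : Fc R L N m - L.-1%:R * Fc R L N m.+1 =
  - ((m <= N)%:R / (N.+1%:R * L.-1%:R ^+ m)).
Proof.
have hnat : (N.+1 - m)%:R = (N.+1 - m.+1)%:R + (m <= N)%:R :> R.
  by rewrite -natrD; congr _%:R; case: leqP => h /=; lia.
have q0 : L.-1%:R != 0 :> R by rewrite gt_eqF // qpos.
have n0 : N.+1%:R != 0 :> R by rewrite pnatr_eq0.
rewrite /Fc hnat exprS; field.
by rewrite expf_neq0 // q0 nat1r n0.
Qed.

Lemma Fc_big k : (N < k)%N -> Fc R L N k = 0.
Proof. by move=> h; rewrite /Fc (_ : (N.+1 - k)%N = 0%N) ?mul0r ?oppr0 //; lia. Qed.

Lemma Fc_le1 k : `|Fc R L N k| <= 1.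
Proof.
rewrite /Fc normrN ger0_norm; last first.
  by rewrite divr_ge0 // mulr_ge0 // exprn_ge0 // ltW // qpos.
rewrite ler_pdivrMr; last by rewrite mulr_gt0 ?ltr0n // exprn_gt0 // qpos.
rewrite mul1r -[X in X <= _]mulr1 ler_pM //.
- by rewrite ler_nat leq_subr.
- by rewrite exprn_ege1 // ler1n; lia.
Qed.

Lemma Gf_le1 (Y z : seq 'I_L) : `|Gf R N Y z| <= 1.
Proof. by rewrite /Gf; case: ifP => _; rewrite ?normr0 ?Fc_le1. Qed.

Lemma Gf_big (Y z : seq 'I_L) : (size Y + N.*2 < size z)%N -> Gf R N Y z = 0.
Proof.
move=> h; rewrite /Gf; case: ifP => // /andP[/andP[_ hod] _].
apply: Fc_big.
have := odd_double_half (size z - size Y); rewrite (negbTE hod) add0n => hd.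
move: h; rewrite -hd -!muln2; lia.
Qed.

End Extra.

Section Assemble.
Variables (R : realType) (L N : nat) (v w : FreeZ2 L) (c : 'I_L).
Hypothesis hL : (1 < L)%N.
Hypothesis hn : (0 < wlen v)%N.
Hypothesis hvw : wlen v = wlen w.
Hypothesis hc1 : last c (val v) != c.
Hypothesis hc2 : head c (val w) != c.

Definition Zs := val v ++ c :: val w.
Definition Yi (i : nat) := take (wlen v).+1 (drop i Zs).

Lemma size_Zs : size Zs = (wlen v + wlen v).+1.
Proof. by rewrite /Zs size_cat /=; move: hvw; rewrite /wlen /=; lia. Qed.

Lemma red_Zs : reduced Zs.
Proof.
rewrite /reduced /Zs sorted_cat_cons; apply/andP; split.
  move: hc1 (valP v); rewrite /reduced; case: (val v) => [|a s] //= h1 h2.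
  by rewrite rcons_path h2 h1.
move: hc2 (valP w); rewrite /reduced; case: (val w) => [|a s] //= h1 h2.
by rewrite h2 eq_sym h1.
Qed.

Lemma size_Yi i : (i <= wlen v)%N -> size (Yi i) = (wlen v).+1.
Proof. by move=> h; rewrite /Yi size_takel // size_drop size_Zs; lia. Qed.

Lemma red_Yi i : reduced (Yi i).
Proof. by rewrite /Yi /reduced; apply: take_sorted; apply: drop_sorted; exact: red_Zs. Qed.

Lemma takeYi i : (i <= wlen v)%N ->
  take (size (Yi i)).-1 (Yi i) = take (wlen v) (drop i Zs).
Proof. by move=> h; rewrite size_Yi // /Yi take_takel. Qed.

Lemma beheadYi i : behead (Yi i) = take (wlen v) (drop i.+1 Zs).
Proof.
rewrite /Yi -[i.+1]add1n -drop_drop.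
by case: (drop i Zs) => [|a s] //=; rewrite drop0.
Qed.

Lemma u0 : take (wlen v) (drop 0 Zs) = val v.
Proof. by rewrite drop0 /Zs take_size_cat. Qed.

Lemma un : take (wlen v) (drop (wlen v).+1 Zs) = val w.
Proof.
rewrite /Zs -cat_rcons drop_size_cat; last by rewrite size_rcons.
by rewrite take_oversize // hvw.
Qed.

Definition eta (x : FreeZ2 L) : R[i] :=
  (\sum_(i < (wlen v).+1) Gf R N (Yi i) (val x))%:C.

Definition errf (z : seq 'I_L) : R := - \sum_(i < (wlen v).+1) Err R N (Yi i) z.

Lemma pointwise p x :
  basis_vec R v x - basis_vec R w x - (hleft p eta x - hright p eta x) =
  (errf (val x))%:C.
Proof.
rewrite hdiff.
have -> : \sum_(s < L) eta (lgen s x) =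
  (\sum_(s < L) \sum_(i < (wlen v).+1) Gf R N (Yi i) (lmul_seq s (val x)))%:C.
  by rewrite rmorph_sum.
have -> : \sum_(s < L) eta (rgen x s) =
  (\sum_(s < L) \sum_(i < (wlen v).+1) Gf R N (Yi i) (rmul_seq (val x) s))%:C.
  by rewrite rmorph_sum.
rewrite /basis_vec -!val_eqE -(rmorph_nat (real_complex R)).
rewrite -(rmorph_nat (real_complex R) (val x == val w)) -!rmorphB; congr (_%:C).
rewrite [\sum_(s < L) \sum_(i < _) Gf _ _ _ (lmul_seq _ _)]exchange_big.
rewrite [\sum_(s < L) \sum_(i < _) Gf _ _ _ (rmul_seq _ _)]exchange_big.
rewrite -sumrB.
rewrite (eq_bigr (fun i : 'I_(wlen v).+1 =>
   Fc R L N 0 * ((val x == behead (Yi i))%:R - (val x == take (size (Yi i)).-1 (Yi i))%:R)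
   + Err R N (Yi i) (val x))); last first.
  move=> i _; apply: Dpoint; first exact: red_Yi.
  by rewrite size_Yi ?ltnS // -ltnS ltn_ord.
rewrite big_split /= /errf Fc0.
pose u := fun j => (val x == take (wlen v) (drop j Zs))%:R : R.
have tel : \sum_(i < (wlen v).+1) -1 *
      ((val x == behead (Yi i))%:R - (val x == take (size (Yi i)).-1 (Yi i))%:R)
    = (val x == val v)%:R - (val x == val w)%:R :> R.
  rewrite (eq_bigr (fun i : 'I_(wlen v).+1 => - (u i.+1 - u i))); last first.
    move=> i _; rewrite beheadYi takeYi; last by rewrite -ltnS ltn_ord.
    by rewrite mulN1r.
  rewrite sumrN -(big_mkord xpredT (fun i => u i.+1 - u i)) telescope_sumr //.
  by rewrite /u un u0 opprB.
by rewrite tel opprD addrA subrr add0r.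
Qed.

End Assemble.

Lemma normC_real (R : realType) (a : R) : `|a%:C| = `|a|%:C.
Proof. by rewrite normc_def /= expr0n addr0 sqrtr_sqr. Qed.

Lemma sq_bound (R : realType) L (g : FreeZ2 L -> R) (phi : nat -> R) B s :
  (1 < L)%N -> (forall l, (B <= l)%N -> phi l = 0) -> (forall l, 0 <= phi l) ->
  (forall x, `|g x| ^+ 2 <= phi (wlen x)) -> uniq s ->
  sqsum (fun x => (g x)%:C) s <= (\sum_(l < B) phi l * (L * L.-1 ^ l)%:R)%:C.
Proof.
move=> hL h0 hp hg us; rewrite /sqsum.
rewrite (eq_bigr (fun x => (`|g x| ^+ 2)%:C)) => [|x _]; last by rewrite normC_real rmorphXn.
rewrite -rmorph_sum lecR; apply: le_trans (sum_count hL h0 hp us).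
by apply: ler_sum => x _; apply: hg.
Qed.

Lemma diff_le1 (R : realType) (b1 b2 : bool) : `|b1%:R - b2%:R| <= 1 :> R.
Proof. by case: b1; case: b2; rewrite ?subrr ?normr0 ?subr0 ?sub0r ?normrN ?normr1. Qed.

Section Bounds.
Variables (R : realType) (L N : nat) (v w : FreeZ2 L) (c : 'I_L).
Hypothesis hL : (1 < L)%N.
Hypothesis hn : (0 < wlen v)%N.
Hypothesis hvw : wlen v = wlen w.
Hypothesis hc1 : last c (val v) != c.
Hypothesis hc2 : head c (val w) != c.

Definition beta (l : nat) : R :=
  let m := ((l - (wlen v).+1)./2)%N in
  if ((wlen v).+1 < l)%N && odd (l - (wlen v).+1) && (m <= N)%N
  then (N.+1%:R * L.-1%:R ^+ m)^-1 else 0.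

Lemma beta_ge0 l : 0 <= beta l.
Proof.
rewrite /beta; case: ifP => // _.
by rewrite invr_ge0 mulr_ge0 // exprn_ge0 // ltW // qpos.
Qed.

Lemma Err_bound i z : (i <= wlen v)%N -> `|Err R N (Yi v w c i) z| <= beta (size z).
Proof.
move=> hi; rewrite /Err (size_Yi hL hn hvw hc1 hc2 hi); case: ifP => hc; last by rewrite normr0 beta_ge0.
rewrite coefE // normrM normrN.
apply: le_trans (ler_wpM2l (normr_ge0 _) (diff_le1 _ _ _)) _.
rewrite mulr1 /beta hc /=; case: leqP => hm.
  rewrite mul1r ger0_norm // invr_ge0 mulr_ge0 // exprn_ge0 // ltW // qpos.
by rewrite mul0r normr0.
Qed.

Lemma errf_bound z : `|errf R N v w c z| <= (wlen v).+1%:R * beta (size z).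
Proof.
rewrite /errf normrN; apply: le_trans (ler_norm_sum _ _ _) _.
apply: le_trans (ler_sum _ (fun (i : 'I_(wlen v).+1) _ => Err_bound z (ltn_ord i))) _.
by rewrite sumr_const card_ord mulr_natl.
Qed.


Definition Bn := ((wlen v).+1 + N.*2 + 2)%N.
Definition Kc : R := (wlen v).+1%:R ^+ 2 * L%:R * L.-1%:R ^+ (wlen v).+2.

Lemma beta_big l : (Bn <= l)%N -> beta l = 0.
Proof.
move=> hB; rewrite /beta; case: ifP => // /andP[/andP[h1 hod] hm].
have := odd_double_half (l - (wlen v).+1); rewrite hod => hd.
move: hd hm h1 hB; rewrite /Bn -!muln2 /=; lia.
Qed.

Lemma per_l l : ((wlen v).+1%:R * beta l) ^+ 2 * (L * L.-1 ^ l)%:R <= Kc / N.+1%:R ^+ 2.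
Proof.
have q0 : L.-1%:R != 0 :> R by rewrite gt_eqF // qpos.
have n0 : N.+1%:R != 0 :> R by rewrite pnatr_eq0.
have Kpos : 0 <= Kc / N.+1%:R ^+ 2.
  have qg : 0 <= L.-1%:R :> R by apply: ltW; apply: qpos.
  by rewrite /Kc; apply: divr_ge0; [apply: mulr_ge0; [apply: mulr_ge0|]|]; rewrite ?ler0n //; apply: exprn_ge0; rewrite ?ler0n.
rewrite /beta; case: ifP => [/andP[/andP[h1 hod] hm] | _]; last first.
  by rewrite mulr0 expr0n mul0r.
have := odd_double_half (l - (wlen v).+1); rewrite hod => hd.
set m := ((l - (wlen v).+1)./2)%N in hd hm *.
rewrite natrM natrX (_ : l = ((wlen v).+2 + m * 2)%N); last first.
  by move: hd h1; rewrite -!muln2 /=; lia.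
rewrite exprD exprM /Kc le_eqVlt; apply/orP; left; apply/eqP.
field.
by rewrite nat1r n0 expf_neq0.
Qed.

Lemma err_sq (s : seq (FreeZ2 L)) : uniq s ->
  sqsum (fun x => (errf R N v w c (val x))%:C) s <= (Bn%:R * (Kc / N.+1%:R ^+ 2))%:C.
Proof.
move=> us.
apply: le_trans (sq_bound (phi := fun l => ((wlen v).+1%:R * beta l) ^+ 2) (B := Bn) _ _ _ _ us) _ => //.
- by move=> l hl; rewrite beta_big // mulr0 expr0n.
- by move=> l; rewrite exprn_ge0 // mulr_ge0 // beta_ge0.
- move=> x; rewrite !expr2; apply: ler_pM => //; exact: errf_bound.
rewrite lecR; apply: le_trans (ler_sum _ (fun (l : 'I_Bn) _ => per_l l)) _.
by rewrite sumr_const card_ord mulr_natl.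
Qed.

Definition gam (l : nat) : R := if (l < Bn)%N then 1 else 0.

Lemma eta_sq (s : seq (FreeZ2 L)) : uniq s ->
  sqsum (eta R N v w c) s <=
  (\sum_(l < Bn) ((wlen v).+1%:R * gam l) ^+ 2 * (L * L.-1 ^ l)%:R)%:C.
Proof.
move=> us.
have -> : eta R N v w c =
  (fun x => (\sum_(i < (wlen v).+1) Gf R N (Yi v w c i) (val x))%:C) by [].
apply: (sq_bound (g := fun x => \sum_(i < (wlen v).+1) Gf R N (Yi v w c i) (val x))
  (phi := fun l => ((wlen v).+1%:R * gam l) ^+ 2) (B := Bn)) => //.
- by move=> l hl; rewrite /gam ltnNge hl mulr0 expr0n.
- by move=> l; rewrite exprn_ge0 // mulr_ge0 // /gam; case: ifP.
move=> x; rewrite !expr2.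
have hb : `|\sum_(i < (wlen v).+1) Gf R N (Yi v w c i) (val x)| <= (wlen v).+1%:R * gam (wlen x).
  apply: le_trans (ler_norm_sum _ _ _) _.
  apply: (@le_trans _ _ (\sum_(i < (wlen v).+1) gam (wlen x))); last by rewrite sumr_const card_ord mulr_natl.
  apply: ler_sum => i _; rewrite /gam; case: ltnP => h; first exact: Gf_le1.
  rewrite Gf_big ?normr0 // (size_Yi hL hn hvw hc1 hc2); last by rewrite -ltnS ltn_ord.
  by move: h; rewrite /Bn /wlen; lia.
by apply: ler_pM.
Qed.

End Bounds.

Lemma pick_c L (p1 p2 : 'I_L) : (3 <= L)%N -> exists c : 'I_L, (p1 != c) && (p2 != c).
Proof.
move=> hL.
have : (0 < #|~: [set p1; p2]|)%N.
  have := cardsC [set p1; p2]; rewrite card_ord cards2.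
  case: (p1 != p2) => /=; lia.
case/card_gt0P => c; rewrite in_setC in_set2 negb_or => /andP[h1 h2].
by exists c; rewrite eq_sym h1 eq_sym h2.
Qed.

Lemma zero_sq (R : realType) L (f : FreeZ2 L -> R[i]) s : (forall x, f x = 0) -> sqsum f s <= 0.
Proof. by move=> h; rewrite /sqsum big1 // => x _; rewrite h normr0 expr0n. Qed.

Theorem lemma2p4 (R : realType) (L : nat) (q : R) :
  (3 <= L)%N -> 0 < q <= 1 ->
  forall v w : FreeZ2 L, wlen v = wlen w ->
  forall eps : R, 0 < eps ->
  exists eta : FreeZ2 L -> R[i],
    in_l2 eta /\
    l2norm_lt
      (fun x => basis_vec R v x - basis_vec R w x
                - (hleft (hecke_p q) eta x - hright (hecke_p q) eta x))
      eps.
Proof.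
move=> hL3 _ v w hvw eps heps.
have hL : (1 < L)%N by lia.
case: (posnP (wlen v)) => [n0 | npos].
  have ev : v = w.
    apply: val_inj; move: n0 hvw; rewrite /wlen.
    by case: (val v) => // ->; case: (val w).
  exists (fun _ => 0); split.
    by exists 0 => s _; rewrite zero_sq.
  exists 0; split; first by rewrite exprn_gt0.
  move=> s _; rewrite zero_sq // => x; rewrite hdiff ev subrr.
  by rewrite !big1 ?subrr.
pose d : 'I_L := Ordinal (ltn_trans (ltnSn 0) hL).
have [c /andP[hc1' hc2']] := pick_c (last d (val v)) (head d (val w)) hL3.
have hc1 : last c (val v) != c.
  by move: hc1' npos; rewrite /wlen; case: (val v).
have hc2 : head c (val w) != c.
  by move: hc2' npos; rewrite hvw /wlen; case: (val w).
pose A : R := ((wlen v).+3)%:R * Kc R v.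
have qg : 0 <= L.-1%:R :> R by apply: ltW; apply: qpos.
have K0 : 0 <= Kc R v.
  by rewrite /Kc; apply: mulr_ge0; [apply: mulr_ge0|]; rewrite ?ler0n //; apply: exprn_ge0; rewrite ?ler0n.
have A0 : 0 <= A by rewrite /A; apply: mulr_ge0; rewrite ?ler0n.
have e2 : 0 < eps ^+ 2 by rewrite exprn_gt0.
pose N := Num.Def.archi_bound (A / eps ^+ 2).
have hN : A / eps ^+ 2 < N%:R by apply: archi_boundP; rewrite divr_ge0 // ltW.
have hN1 : A < eps ^+ 2 * N.+1%:R.
  rewrite -ltr_pdivrMl // mulrC; apply: lt_le_trans hN _.
  by rewrite ler_nat.
have Npos : 0 < N.+1%:R :> R by rewrite ltr0n.
have hb : (Bn N v)%:R * (Kc R v / N.+1%:R ^+ 2) < eps ^+ 2.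
  rewrite mulrA ltr_pdivrMr ?exprn_gt0 //.
  have hB : (Bn N v)%:R <= ((wlen v).+3)%:R * N.+1%:R :> R.
    by rewrite -natrM ler_nat /Bn -!muln2; nia.
  apply: le_lt_trans (ler_wpM2r K0 hB) _.
  rewrite mulrAC -/A expr2 mulrA ltr_pM2r //.
exists (eta R N v w c); split.
  by eexists => s us; apply: (eta_sq R N hL npos hvw hc1 hc2 us).
exists ((Bn N v)%:R * (Kc R v / N.+1%:R ^+ 2)); split => // s us.
rewrite (_ : sqsum _ s = sqsum (fun x => (errf R N v w c (val x))%:C) s).
  exact: (err_sq R N hL npos hvw hc1 hc2 us).
rewrite /sqsum; apply: eq_bigr => x _.
by rewrite (pointwise N hL npos hvw hc1 hc2).
Qed.
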